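(* Let $G$ be an ample Hausdorff groupoid, let $R$ be a commutative unital ring with the discrete topology, let $T \le R^\times$, and let $\sigma\colon G^{(2)} \to T$ be a continuous $2$-cocycle. There is an $R$-algebra isomorphism $\Psi\colon A_R(G; G \times_\sigma T) \to A_R(G,\sigma^{-1})$ with $\Psi(f)(\gamma) = f(\gamma,1)$ for all $f \in A_R(G; G\times_\sigma T)$ and $\gamma \in G$, where $\sigma^{-1}(\alpha,\beta) := \sigma(\alpha,\beta)^{-1}$. If $R$ has a $T$-inverse involution, then $\Psi$ is a $*$-isomorphism.
   Context: Groupoids are locally compact Hausdorff topological groupoids; $G$ is ample if it has a basis of compact open bisections; $T$ has the discrete topology. A continuous $2$-cocycle $\omega\colon G^{(2)}\to T$ is continuous with $\omega(\alpha,\beta)\omega(\alpha\beta,\gamma) = \omega(\alpha,\beta\gamma)\omega(\beta,\gamma)$ and $\omega(r(\gamma),\gamma)=1=\omega(\gamma,s(\gamma))$. $G\times_\sigma T$ is $G\times T$ with product topology, multiplication $(\alpha,z)(\beta,w) = (\alpha\beta,\sigma(\alpha,\beta)zw)$, inverse $(\alpha,z)^{-1} = (\alpha^{-1},\sigma(\alpha,\alpha^{-1})^{-1}z^{-1})$, with $q(\gamma,z)=\gamma$; $T$ acts on it by $z\cdot(\alpha,w) = (\alpha,zw)$. $A_R(G;G\times_\sigma T)$ is the set of continuous $f\colon G\times_\sigma T\to R$ with $f(z\cdot\varepsilon) = zf(\varepsilon)$ and $\overline{q(\{f\neq0\})}$ compact, with pointwise module operations, multiplication $(f*g)(\varepsilon)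 = \sum_{\gamma\in G^{s(q(\varepsilon))}} f(\varepsilon S(\gamma))g(S(\gamma)^{-1})$ where $S(\gamma) = (\gamma,1)$, and (when $R$ has a $T$-inverse involution) involution $f^*(\varepsilon) = \overline{f(\varepsilon^{-1})}$. $A_R(G,\omega)$ is the $R$-module of locally constant compactly supported $f\colon G\to R$ with multiplication $(f*_\omega g)(\gamma) = \sum_{\alpha\beta=\gamma}\omega(\alpha,\beta)f(\alpha)g(\beta)$ and involution $f^*(\gamma) = \omega(\gamma,\gamma^{-1})^{-1}\overline{f(\gamma^{-1})}$. A $T$-inverse involution on $R$ is a ring involution $r\mapsto\overline r$ with $\overline z = z^{-1}$ for $z\in T$. *)

(* Defs.v *)
From HB Require Import structures.
From mathcomp Require Import all_boot all_algebra.
From mathcomp Require Import boolp classical_sets functions fsbigop topology.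

Set Implicit Arguments.
Unset Strict Implicit.
Unset Printing Implicit Defensive.

Import GRing.Theory.
Local Open Scope classical_set_scope.
Local Open Scope ring_scope.

(* multiplication and inversion are total functions on G which are     *)
(* only meaningful on composable pairs (s a = r b).                    *)
Record groupoid (G : topologicalType) := Groupoid {
  gunit : set G;
  grng : G -> G;
  gsrc : G -> G;
  gmul : G -> G -> G;
  ginv : G -> G;
  gunit_rng : forall x, gunit (grng x);
  gunit_src : forall x, gunit (gsrc x);
  grng_unit : forall u, gunit u -> grng u = u;
  gsrc_unit : forall u, gunit u -> gsrc u = u;
  grng_mul : forall a b, gsrc a = grng b -> grng (gmul a b) = grng a;
  gsrc_mul : forall a b, gsrc a = grng b -> gsrc (gmul a b) = gsrc b;
  gmulA : forall a b c, gsrc a = grng b -> gsrc b = grng c ->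
            gmul (gmul a b) c = gmul a (gmul b c);
  gmul_rng : forall a, gmul (grng a) a = a;
  gmul_src : forall a, gmul a (gsrc a) = a;
  grng_inv : forall a, grng (ginv a) = gsrc a;
  gsrc_inv : forall a, gsrc (ginv a) = grng a;
  gmulV : forall a, gmul a (ginv a) = grng a;
  gmulVr : forall a, gmul (ginv a) a = gsrc a;
  gmul_cont : forall p : G * G, gsrc p.1 = grng p.2 ->
      {for p, continuous (fun q : subspace [set q : G * G | gsrc q.1 = grng q.2]
                              => gmul q.1 q.2)};
  ginv_cont : continuous ginv
}.

Section GroupoidDefs.
Variables (G : topologicalType) (Gm : groupoid G).

Definition G2 : set (G * G) := [set p | gsrc Gm p.1 = grng Gm p.2].

Definition open_bisection (B : set G) :=
  [/\ open B,
      (forall x y, B x -> B y -> grng Gm x = grng Gm y -> x = y),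
      (forall x y, B x -> B y -> gsrc Gm x = gsrc Gm y -> x = y) &
      (forall V, V `<=` B -> open V ->
          open (grng Gm @` V) /\ open (gsrc Gm @` V))].

Definition ample_hausdorff :=
  [/\ hausdorff_space G, locally_compact [set: G] &
      (forall (U : set G) x, open U -> U x ->
         exists B, [/\ open_bisection B, compact B, B x & B `<=` U])].

End GroupoidDefs.

(* A function into a discrete space is continuous on the subspace A    *)
(* iff it is locally constant on A.                                    *)
Definition disc_continuous_on (X : topologicalType) (Y : Type)
    (A : set X) (f : X -> Y) :=
  forall x, A x -> exists U : set X,
    [/\ open U, U x & forall y, A y -> U y -> f y = f x].

Record unit_subgroup (R : comPzRingType) := UnitSubgroup {
  usg :> {pred R};
  usg1 : 1 \in usg;
  usgM : forall x y, x \in usg -> y \in usg -> x * y \in usg;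
  usgV : forall x, x \in usg -> exists y : R, y \in usg /\ x * y = 1
}.

Section TwistedDefs.
Variables (R : comPzRingType) (T : unit_subgroup R).

Definition tT := {z : R | z \in T}.

Definition t1 : tT := exist _ 1 (usg1 T).
Definition tmul (a b : tT) : tT :=
  exist _ (sval a * sval b) (usgM (svalP a) (svalP b)).
Definition tinv (a : tT) : tT :=
  let y := cid (usgV (svalP a)) in exist _ (sval y) (proj1 (svalP y)).

Variables (G : topologicalType) (Gm : groupoid G).

Definition cocycle (sigma : G -> G -> tT) :=
  [/\ disc_continuous_on (G2 Gm) (fun p => sigma p.1 p.2),
      (forall a b c, gsrc Gm a = grng Gm b -> gsrc Gm b = grng Gm c ->
         sval (sigma a b) * sval (sigma (gmul Gm a b) c)
         = sval (sigma a (gmul Gm b c)) * sval (sigma b c)),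
      (forall g, sval (sigma (grng Gm g) g) = 1) &
      (forall g, sval (sigma g (gsrc Gm g)) = 1)].

Definition cocycle_inv (sigma : G -> G -> tT) : G -> G -> tT :=
  fun a b => tinv (sigma a b).

Section Twist.
Variable sigma : G -> G -> tT.

Definition tw_mul (e d : G * tT) : G * tT :=
  (gmul Gm e.1 d.1, tmul (tmul (sigma e.1 d.1) e.2) d.2).
Definition tw_inv (e : G * tT) : G * tT :=
  (ginv Gm e.1, tmul (tinv (sigma e.1 (ginv Gm e.1))) (tinv e.2)).
Definition tw_act (z : tT) (e : G * tT) : G * tT := (e.1, tmul z e.2).
Definition tw_S (g : G) : G * tT := (g, t1).

Definition twA (f : G * tT -> R) :=
  [/\ (forall z : tT, disc_continuous_on setT (fun g => f (g, z))),
      (forall (z : tT) (e : G * tT), f (tw_act z e) = sval z * f e) &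
      compact (closure [set g | exists z : tT, f (g, z) != 0])].

Definition tw_conv (f g : G * tT -> R) : G * tT -> R :=
  fun e => (\sum_(c \in [set c : G | grng Gm c = gsrc Gm e.1])
              f (tw_mul e (tw_S c)) * g (tw_inv (tw_S c)))%R.

Definition tw_star (conj : R -> R) (f : G * tT -> R) : G * tT -> R :=
  fun e => conj (f (tw_inv e)).

End Twist.

Section CocycleAlg.
Variable omega : G -> G -> tT.

Definition coA (f : G -> R) :=
  disc_continuous_on setT f /\ compact (closure [set g | f g != 0]).

Definition co_conv (f g : G -> R) : G -> R :=
  fun x => (\sum_(p \in [set p : G * G | gsrc Gm p.1 = grng Gm p.2
                                      /\ gmul Gm p.1 p.2 = x])
              sval (omega p.1 p.2) * f p.1 * g p.2)%R.

Definition co_star (conj : R -> R) (f : G -> R) : G -> R :=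
  fun x => sval (tinv (omega x (ginv Gm x))) * conj (f (ginv Gm x)).

End CocycleAlg.

Definition T_inverse_involution (conj : R -> R) :=
  [/\ (forall x y, conj (x + y) = conj x + conj y),
      (forall x y, conj (x * y) = conj x * conj y),
      conj 1 = 1,
      (forall x, conj (conj x) = x) &
      (forall z : tT, conj (sval z) = sval (tinv z))].

Definition Psi (f : G * tT -> R) : G -> R := fun g => f (g, t1).

End TwistedDefs.

(* Main.v *)
Require Import Defs.
From HB Require Import structures.
From mathcomp Require Import all_boot all_algebra.
From mathcomp Require Import boolp classical_sets functions fsbigop topology.

Local Open Scope ring_scope.
Import GRing.Theory.
From mathcomp Require Import ring.

Set Implicit Arguments.
Section Helpers.
Variables (R : comPzRingType) (T : unit_subgroup R).

Lemma tT_eq (a b : tT T) : sval a = sval b -> a = b.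
Proof.
case: a => a Ha; case: b => b Hb /= E; subst b.
by rewrite (bool_irrelevance Ha Hb).
Qed.

Lemma sval_tmul (a b : tT T) : sval (tmul a b) = sval a * sval b.
Proof. by []. Qed.

Lemma sval_t1 : sval (t1 T) = 1.
Proof. by []. Qed.

Lemma tinvP (a : tT T) : sval a * sval (tinv a) = 1.
Proof. rewrite /tinv /=; exact: (proj2 (svalP (cid (usgV (svalP a))))). Qed.

Lemma tinv_uniq (a : tT T) y : sval a * y = 1 -> sval (tinv a) = y.
Proof.
move=> H; have := tinvP a => H2.
by rewrite -[sval (tinv a)]mulr1 -H mulrA (mulrC _ (sval a)) H2 mul1r.
Qed.

Lemma tinv1 : sval (tinv (t1 T)) = 1.
Proof. by apply: tinv_uniq; rewrite /= mulr1. Qed.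

Lemma tinvK (a : tT T) : sval (tinv (tinv a)) = sval a.
Proof. by apply: tinv_uniq; rewrite mulrC tinvP. Qed.

Lemma twA_eqv (G : topologicalType) (f : G * tT T -> R) g z :
  twA f -> f (g, z) = sval z * f (g, t1 T).
Proof.
case=> _ H _; rewrite -H /tw_act /=; congr f; congr pair.
by apply: tT_eq; rewrite /= mulr1.
Qed.

Variables (G : topologicalType) (Gm : groupoid G).

Lemma ginvK (b : G) : ginv Gm (ginv Gm b) = b.
Proof.
have E1 : gsrc Gm (ginv Gm (ginv Gm b)) = grng Gm (ginv Gm b)
  by rewrite (gsrc_inv Gm) (grng_inv Gm).
rewrite -[LHS](gmul_src Gm) E1 (grng_inv Gm) -(gmulVr Gm b) -gmulA //; last by rewrite (gsrc_inv Gm).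
by rewrite (gmulVr Gm) (gsrc_inv Gm) (gmul_rng Gm).
Qed.

End Helpers.
Unset Implicit Arguments.

Theorem corollary4p25 (G : topologicalType) (Gm : groupoid G)
    (R : comPzRingType) (T : unit_subgroup R) (sigma : G -> G -> tT T) :
  ample_hausdorff Gm -> cocycle Gm sigma ->
  let A1 := @twA R T G in
  let A2 := @coA R G in
  let Psi := @Psi R T G in
  (* Psi maps A_R(G; G x_sigma T) into A_R(G, sigma^{-1}) *)
  (forall f, A1 f -> A2 (Psi f)) /\
  (* bijectively *)
  (forall f g, A1 f -> A1 g -> Psi f = Psi g -> f = g) /\
  (forall h, A2 h -> exists2 f, A1 f & Psi f = h) /\
  (* R-linearly *)
  (forall f g, A1 f -> A1 g ->
     Psi (fun e => f e + g e) = (fun x => Psi f x + Psi g x)) /\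
  (forall (c : R) f, A1 f -> Psi (fun e => c * f e) = (fun x => c * Psi f x)) /\
  (* multiplicatively *)
  (forall f g, A1 f -> A1 g ->
     Psi (tw_conv Gm sigma f g)
     = co_conv Gm (cocycle_inv sigma) (Psi f) (Psi g)) /\
  (* and it is a *-isomorphism for any T-inverse involution on R *)
  (forall conj : R -> R, T_inverse_involution T conj ->
     forall f, A1 f ->
       Psi (tw_star Gm sigma conj f) = co_star Gm (cocycle_inv sigma) conj (Psi f)).
Proof.
move=> _ [_ Hcoc _ Hs1] A1 A2 Psi0.
split.
  move=> f Hf; have Hf' := Hf; case: Hf' => Hc _ Hk; split; first exact: Hc.
  apply: (subclosed_compact _ Hk); first exact: closed_closure.
  apply: closureS => g /= H; by exists (t1 T).
split.
  move=> f g Hf Hg E; apply/funext => -[x z].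
  rewrite (twA_eqv _ _ Hf) (twA_eqv _ _ Hg).
  by have := congr1 (fun F => F x) E; rewrite /Psi0 /Psi /= => ->.
split.
  move=> h [Hc Hk]; exists (fun e => sval e.2 * h e.1); last first.
    by apply/funext => x; rewrite /Psi0 /Psi /= mul1r.
  split.
  - move=> z x _; have [U [oU Ux HU]] := Hc x I.
    by exists U; split => // y _ Uy /=; rewrite HU.
  - by move=> z [g w]; rewrite /tw_act /= mulrA.
  - suff -> : [set g | exists z : tT T, sval z * h g != 0]%classic = [set g | h g != 0]%classic by [].
    apply/seteqP; split => g /=.
      by move=> [z]; apply: contra => /eqP ->; rewrite mulr0.
    by move=> H; exists (t1 T); rewrite /= mul1r.
split; first by [].
split; first by [].
split; last first.
  move=> conj [_ cM _ _ cT] f Hf; apply/funext => x.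
  rewrite /Psi0 /Psi /tw_star /co_star /tw_inv /cocycle_inv.
  rewrite (twA_eqv _ _ Hf) sval_tmul tinv1 mulr1 cM cT.
  done.
move=> f g Hf Hg; apply/funext => x.
rewrite /Psi0 /Psi /tw_conv /co_conv /cocycle_inv /tw_mul /tw_inv /tw_S.
set h := fun c : G => (gmul Gm x c, ginv Gm c).
set P := [set c : G | grng Gm c = gsrc Gm (x, t1 T).1]%classic.
have HQ : [set p : G * G | gsrc Gm p.1 = grng Gm p.2 /\ gmul Gm p.1 p.2 = x]%classic
          = (h @` P)%classic.
  apply/seteqP; split.
  - move=> [a b] /= [E1 E2]; exists (ginv Gm b).
      rewrite /P /= (grng_inv Gm) -E2 gsrc_mul //.
    rewrite /h -E2 gmulA //; last by rewrite (grng_inv Gm).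
    by rewrite (gmulV Gm) -E1 (gmul_src Gm) ginvK.
  - move=> _ [c Pc <-]; rewrite /h /P /= in Pc *; split.
      by rewrite gsrc_mul ?(grng_inv Gm) //.
    rewrite gmulA //; last by rewrite (grng_inv Gm).
    by rewrite (gmulV Gm) Pc (gmul_src Gm).
rewrite HQ fsbig_image; last first.
  move=> c d _ _ [] _ /(congr1 (ginv Gm)); rewrite !ginvK => ->.
  done.
apply: eq_fsbigr => c; rewrite inE => Pc; rewrite /P /= in Pc.
rewrite (twA_eqv _ _ Hf) (twA_eqv _ _ Hg) !sval_tmul tinv1 sval_t1.
have Hd : sval (sigma (gmul Gm x c) (ginv Gm c)) *
          (sval (sigma x c) * sval (tinv (sigma c (ginv Gm c)))) = 1.
  rewrite mulrA (mulrC _ (sval (sigma x c))) Hcoc //; last first.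
    by rewrite (grng_inv Gm).
  by rewrite (gmulV Gm) Pc Hs1 mul1r tinvP.
rewrite (@tinv_uniq _ _ _ _ Hd) /Psi; ring.
Qed.
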